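(* Let $K,G,m_0,A_g,B_g,\bar f_c,\bar f_t>0$, $m_g'(p)=A_g e^{\frac{p-\bar f_t/3}{B_g\bar f_c}}$, $e\in[0.5,1]$, and let $p^{tr}\in\mathbb R$, $\varrho^{tr}\ge0$, $r_e^{tr}\in\mathbb R$. For $\gamma\ge0$ let $\hat p_{tr}(\gamma)$ be the unique real $p_\gamma$ with $p_\gamma+\gamma Km_g'(p_\gamma)/\bar f_c=p^{tr}$, let $\hat\varrho_{tr}(\gamma)=\frac{1}{1+\gamma 6G/\bar f_c^2}\big(\varrho^{tr}-\gamma\frac{2Gm_0}{\sqrt6\bar f_c}\big)^+$, and $q_{tr}(\gamma)=\frac32\big(\frac{\hat\varrho_{tr}(\gamma)}{\bar f_c}\big)^2+m_0\big(\frac{\hat\varrho_{tr}(\gamma)r_e^{tr}}{\sqrt6\bar f_c}+\frac{\hat p_{tr}(\gamma)}{\bar f_c}\big)-1$. Then, with $p^a=\bar f_c/m_0$, $$q_{tr}\Big(\frac{\sqrt6\bar f_c\varrho^{tr}}{2Gm_0}\Big)\ge0\quad\text{if and only if}\quad p^{tr}-\frac{\sqrt6K}{2G}\frac{m_g'(p^a)}{m_0}\varrho^{tr}-p^a\ge0.$$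
   Context: $(x)^+=\max\{0,x\}$. In the paper, $p^{tr},\varrho^{tr},r_e^{tr}$ are the hydrostatic stress, deviatoric norm and Lode-angle function value of a trial stress, but the claim only uses them as the numbers specified. *)

(* Defs.v *)
From Stdlib Require Import Reals Lra.
Open Scope R_scope.

Definition pos_part (x : R) : R := Rmax 0 x.

Definition mg' (Ag Bg fbc fbt p : R) : R := Ag * exp ((p - fbt / 3) / (Bg * fbc)).

Definition is_p_hat (K Ag Bg fbc fbt ptr gamma p : R) : Prop :=
  p + gamma * K * mg' Ag Bg fbc fbt p / fbc = ptr.

Definition rho_hat (G m0 fbc rhotr gamma : R) : R :=
  / (1 + gamma * 6 * G / (fbc ^ 2)) *
  pos_part (rhotr - gamma * (2 * G * m0 / (sqrt 6 * fbc))).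

(* q_tr(gamma), given the value phat = p_hat_tr(gamma) *)
Definition q_tr (G m0 fbc rhotr retr gamma phat : R) : R :=
  let rh := rho_hat G m0 fbc rhotr gamma in
  3 / 2 * (rh / fbc) ^ 2 + m0 * (rh * retr / (sqrt 6 * fbc) + phat / fbc) - 1.

(* Main.v *)
Require Import Defs.
From Stdlib Require Import Reals Lra.
Open Scope R_scope.

Lemma mg_mono (Ag Bg fbc fbt x y : R) : 0 < Ag -> 0 < Bg -> 0 < fbc -> x <= y ->
  mg' Ag Bg fbc fbt x <= mg' Ag Bg fbc fbt y.
Proof.
  intros hA hB hc hxy. unfold mg'. apply Rmult_le_compat_l; [lra|].
  destruct (Req_dec x y) as [->|hne]; [lra|].
  left; apply exp_increasing. unfold Rdiv. apply Rmult_lt_compat_r.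
  - apply Rinv_0_lt_compat, Rmult_lt_0_compat; lra.
  - lra.
Qed.

Theorem lemma2 (K G m0 Ag Bg fbc fbt e ptr rhotr retr : R)
  (hK : 0 < K) (hG : 0 < G) (hm0 : 0 < m0) (hAg : 0 < Ag) (hBg : 0 < Bg)
  (hfc : 0 < fbc) (hft : 0 < fbt) (he : 0.5 <= e <= 1) (hrho : 0 <= rhotr) :
  let gstar := sqrt 6 * fbc * rhotr / (2 * G * m0) in
  let pa := fbc / m0 in
  forall p : R, is_p_hat K Ag Bg fbc fbt ptr gstar p ->
  (q_tr G m0 fbc rhotr retr gstar p >= 0 <->
   ptr - sqrt 6 * K / (2 * G) * (mg' Ag Bg fbc fbt pa / m0) * rhotr - pa >= 0).
Proof.
  intros gstar pa p hp. unfold is_p_hat in hp.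
  assert (hs : 0 < sqrt 6) by (apply sqrt_lt_R0; lra).
  assert (hz : rhotr - gstar * (2 * G * m0 / (sqrt 6 * fbc)) = 0).
  { unfold gstar. field. repeat split; lra. }
  assert (hrh : rho_hat G m0 fbc rhotr gstar = 0).
  { unfold rho_hat, pos_part. rewrite hz. rewrite Rmax_left by lra. ring. }
  unfold q_tr. cbv zeta. rewrite hrh.
  set (c := gstar * K / fbc).
  assert (hc : 0 <= c).
  { unfold c, gstar. unfold Rdiv. repeat apply Rmult_le_pos; try lra;
    left; apply Rinv_0_lt_compat; try lra. repeat apply Rmult_lt_0_compat; lra. }
  assert (hp' : p + c * mg' Ag Bg fbc fbt p = ptr).
  { rewrite <- hp. unfold c. field. lra. }
  assert (hr : sqrt 6 * K / (2 * G) * (mg' Ag Bg fbc fbt pa / m0) * rhotr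
               = c * mg' Ag Bg fbc fbt pa).
  { unfold c, gstar. field. repeat split; lra. }
  rewrite hr.
  assert (hq : 3 / 2 * (0 / fbc) ^ 2 + m0 * (0 * retr / (sqrt 6 * fbc) + p / fbc) - 1
               = m0 / fbc * (p - pa)).
  { unfold pa. field. lra. }
  rewrite hq.
  assert (hmf : 0 < m0 / fbc) by (unfold Rdiv; apply Rmult_lt_0_compat; [lra|apply Rinv_0_lt_compat; lra]).
  split; intro h.
  - assert (p >= pa).
    { destruct (Rlt_or_le p pa) as [hl|hl]; [|lra].
      assert (m0 / fbc * (p - pa) < 0) by (assert (0 < m0 / fbc * (pa - p)) by (apply Rmult_lt_0_compat; lra); nra). lra. }
    assert (mg' Ag Bg fbc fbt pa <= mg' Ag Bg fbc fbt p) by (apply mg_mono; lra).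
    assert (c * mg' Ag Bg fbc fbt pa <= c * mg' Ag Bg fbc fbt p) by (apply Rmult_le_compat_l; lra).
    lra.
  - assert (p >= pa).
    { destruct (Rlt_or_le p pa) as [hl|hl]; [|lra].
      assert (mg' Ag Bg fbc fbt p <= mg' Ag Bg fbc fbt pa) by (apply mg_mono; lra).
      assert (c * mg' Ag Bg fbc fbt p <= c * mg' Ag Bg fbc fbt pa) by (apply Rmult_le_compat_l; lra).
      lra. }
    apply Rle_ge, Rmult_le_pos; lra.
Qed.
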